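(* For each integer $k\ge2$ there exists a constant $C_k>0$ such that the following holds. Let $(b_j)_{j\ge1}$ be any increasing sequence of positive numbers with $\sum_{j\ge1}1/b_j<+\infty$, let $f(z)=\prod_{j=1}^\infty(1+z/b_j)$, and let $F(s)=\ln f(e^s)=\sum_{j=1}^\infty\ln(1+e^s/b_j)$, $s\in\mathbb{R}$. Then $$|F^{(k)}(s)|\le C_k\,F''(s)\quad\text{for every } s\in\mathbb{R}.$$
   Context: $F^{(k)}$ denotes the $k$-th derivative of the real function $F$. *)

(* Defs.v *)
From Stdlib Require Import Reals.
From Coquelicot Require Import Coquelicot.
Open Scope R_scope.

(* F(s) = ln f(e^s) = sum_{j>=1} ln(1 + e^s / b_j); the sequence b is indexed
   from 0 here (b 0 plays the role of b_1). *)
Definition Flog (b : nat -> R) (s : R) : R :=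
  Series (fun j => ln (1 + exp s / b j)).

(* Main.v *)
Require Import Defs.
From Stdlib Require Import Reals Lra Lia FunctionalExtensionality.
From Coquelicot Require Import Coquelicot.
Open Scope R_scope.
Lemma exs_le (a b : nat -> R) : (forall n, Rabs (a n) <= b n) -> ex_series b -> ex_series a.
Proof. intros H Hb. apply (@ex_series_le R_AbsRing R_CompleteNormedModule a b); auto. Qed.
Lemma exs_scal_l (c : R) (a : nat -> R) : ex_series a -> ex_series (fun n => c * a n).
Proof. intro H. apply (@ex_series_scal_l R_AbsRing R_NormedModule c a H). Qed.
Lemma exs_plus (a b : nat -> R) : ex_series a -> ex_series b -> ex_series (fun n => a n + b n).
Proof. intros H1 H2. apply (@ex_series_plus R_AbsRing R_NormedModule a b H1 H2). Qed.
Lemma exs_minus (a b : nat -> R) : ex_series a -> ex_series b -> ex_series (fun n => a n - b n).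
Proof. intros H1 H2. apply (@ex_series_minus R_AbsRing R_NormedModule a b H1 H2). Qed.
Lemma exs_ext (a b : nat -> R) : (forall n, a n = b n) -> ex_series a -> ex_series b.
Proof. intros H1 H2. apply (@ex_series_ext R_AbsRing R_NormedModule a b H1 H2). Qed.
Lemma exs_incr (a : nat -> R) n : ex_series a -> ex_series (fun k => a (n + k)%nat).
Proof. intros H. apply (proj1 (@ex_series_incr_n R_AbsRing R_NormedModule a n) H). Qed.

Lemma tail_small (M : nat -> R) : ex_series M -> forall eps, 0 < eps ->
  exists N, Series (fun k => M (S N + k)%nat) < eps.
Proof.
  intros HM eps He.
  destruct (proj1 (is_series_Reals M (Series M)) (Series_correct _ HM) eps He) as [N HN].
  exists N. specialize (HN N (le_n _)).
  rewrite (Series_incr_n M (S N)) in HN by (auto with arith). simpl pred in HN.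
  unfold Rdist in HN.
  replace (sum_f_R0 M N - (sum_f_R0 M N + Series (fun k => M (S N + k)%nat)))
    with (- Series (fun k => M (S N + k)%nat)) in HN by ring.
  rewrite Rabs_Ropp in HN. pose proof (Rle_abs (Series (fun k => M (S N + k)%nat))). lra.
Qed.

Lemma sum_f_derive (g g' : nat -> R -> R) (s0 : R) N :
  (forall j, is_derive (g j) s0 (g' j s0)) ->
  is_derive (fun x => sum_f_R0 (fun j => g j x) N) s0 (sum_f_R0 (fun j => g' j s0) N).
Proof.
  intros H. induction N as [|N IH]; simpl.
  - apply H.
  - apply (is_derive_plus (fun x => sum_f_R0 (fun j => g j x) N) (fun x => g (S N) x)); auto.
Qed.

Lemma sum_f_comb (a b e : nat -> R) c N :
  sum_f_R0 (fun j => (a j - b j) * c - e j) N =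
  (sum_f_R0 a N - sum_f_R0 b N) * c - sum_f_R0 e N.
Proof. induction N; simpl; [ring| rewrite IHN; ring]. Qed.

Lemma series_derive (g g' : nat -> R -> R) (M : nat -> R) (s0 d : R) :
  0 < d ->
  (forall j x, Rabs (x - s0) < d -> is_derive (g j) x (g' j x)) ->
  (forall j x, Rabs (x - s0) < d -> Rabs (g' j x) <= M j) ->
  ex_series M -> ex_series (fun j => g j s0) ->
  is_derive (fun x => Series (fun j => g j x)) s0 (Series (fun j => g' j s0)).
Proof.
  intros Hd Hder Hbnd HM Hg0.
  assert (Hs0 : Rabs (s0 - s0) < d) by (rewrite Rminus_diag, Rabs_R0; lra).
  assert (HM0 : forall j, 0 <= M j).
  { intro j. eapply Rle_trans; [apply Rabs_pos| apply (Hbnd j s0 Hs0)]. }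
  assert (Hg'0 : ex_series (fun j => g' j s0)).
  { apply (exs_le _ M); auto. }
  assert (Hvar : forall j h, Rabs h < d -> Rabs (g j (s0 + h) - g j s0) <= M j * Rabs h).
  { intros j h Hh. replace (Rabs h) with (Rabs (s0 + h - s0)) by (f_equal; ring).
    apply (bounded_variation (g j) (g' j)). intros t Ht. split.
    - apply Hder. replace (s0 + h - s0) with h in Ht by ring. lra.
    - apply Hbnd. replace (s0 + h - s0) with h in Ht by ring. lra. }
  assert (Hgh : forall h, Rabs h < d -> ex_series (fun j => g j (s0 + h))).
  { intros h Hh.
    assert (E1 : ex_series (fun j => g j (s0 + h) - g j s0)).
    { apply (exs_le _ (fun j => M j * Rabs h)).
      - intro n. apply Hvar; auto.
      - apply ex_series_scal_r; auto. }
    apply exs_ext with (fun j => (g j (s0 + h) - g j s0) + g j s0).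
    - intro; ring.
    - apply (exs_plus (fun j => g j (s0 + h) - g j s0) (fun j => g j s0)); auto. }
  apply is_derive_Reals. intros eps Heps.
  destruct (tail_small M HM (eps / 4)) as [N HN]; [lra|].
  pose proof (proj1 (is_derive_Reals _ _ _) (sum_f_derive g g' s0 N (fun j => Hder j s0 Hs0))) as Hfin.
  destruct (Hfin (eps / 2)) as [del1 Hdel1]; [lra|].
  assert (Hdel : 0 < Rmin del1 d) by (apply Rmin_pos; [apply del1| lra]).
  exists (mkposreal _ Hdel). intros h Hh0 Hh. simpl in Hh.
  assert (Hh1 : Rabs h < del1) by (eapply Rlt_le_trans; [apply Hh| apply Rmin_l]).
  assert (Hh2 : Rabs h < d) by (eapply Rlt_le_trans; [apply Hh| apply Rmin_r]).
  set (D := fun j => (g j (s0 + h) - g j s0) * / h - g' j s0).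
  assert (HDb : forall j, Rabs (D j) <= 2 * M j).
  { intro j. unfold D.
    assert (Rabs ((g j (s0 + h) - g j s0) * / h) <= M j).
    { rewrite Rabs_mult, Rabs_inv.
      apply (Rmult_le_reg_r (Rabs h)); [apply Rabs_pos_lt; auto|].
      rewrite Rmult_assoc, Rinv_l by (apply Rabs_no_R0; auto). rewrite Rmult_1_r. apply Hvar; auto. }
    pose proof (Hbnd j s0 Hs0).
    eapply Rle_trans; [apply Rabs_triang|]. rewrite Rabs_Ropp. lra. }
  assert (HDs : ex_series D).
  { apply (exs_le _ (fun j => 2 * M j)); auto. apply exs_scal_l; auto. }
  assert (HDv : Series D = (Series (fun j => g j (s0 + h)) - Series (fun j => g j s0)) / h
                             - Series (fun j => g' j s0)).
  { unfold D. rewrite Series_minus.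
    - rewrite Series_scal_r, Series_minus; auto. 
    - apply ex_series_scal_r. apply (exs_minus (fun j => g j (s0 + h)) (fun j => g j s0)); auto.
    - auto. }
  rewrite <- HDv.
  rewrite (Series_incr_n D (S N)) by auto with arith. simpl pred.
  assert (Htail : Rabs (Series (fun k => D (S N + k)%nat)) <= 2 * Series (fun k => M (S N + k)%nat)).
  { eapply Rle_trans. apply Series_Rabs.
    - apply (exs_le _ (fun k => 2 * M (S N + k)%nat)).
      + intro n. rewrite Rabs_Rabsolu. apply HDb.
      + apply exs_scal_l. apply exs_incr. auto.
    - rewrite <- Series_scal_l. apply Series_le.
      + intro n. split; [apply Rabs_pos| apply HDb].
      + apply exs_scal_l. apply exs_incr. auto. }
  assert (Hf : Rabs (sum_f_R0 D N) < eps / 2).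
  { unfold D. rewrite sum_f_comb. specialize (Hdel1 h Hh0 Hh1).
    exact Hdel1. }
  eapply Rle_lt_trans. apply Rabs_triang. lra.
Qed.
Inductive IsPoly : (R -> R) -> Prop :=
| IP_const c : IsPoly (fun _ => c)
| IP_id : IsPoly (fun x => x)
| IP_plus p q : IsPoly p -> IsPoly q -> IsPoly (fun x => p x + q x)
| IP_mult p q : IsPoly p -> IsPoly q -> IsPoly (fun x => p x * q x).

Lemma IsPoly_ext p q : IsPoly p -> (forall x, p x = q x) -> IsPoly q.
Proof. intros H E. replace q with p; auto. apply functional_extensionality; auto. Qed.

Lemma IsPoly_der p : IsPoly p -> IsPoly (Derive p) /\ forall x, is_derive p x (Derive p x).
Proof.
  induction 1 as [c| |p q Hp [IHp Dp] Hq [IHq Dq]|p q Hp [IHp Dp] Hq [IHq Dq]].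
  - split.
    + apply IsPoly_ext with (fun _ => 0). constructor. intro x. rewrite Derive_const; auto.
    + intro x. rewrite Derive_const. apply (is_derive_const c x).
  - assert (E : forall x, is_derive (fun x : R => x) x 1) by (intro x; apply (is_derive_id x)).
    assert (U : forall x, Derive (fun x : R => x) x = 1) by (intro x; apply is_derive_unique, E).
    split.
    + apply IsPoly_ext with (fun _ => 1). constructor. intro x. rewrite U; auto.
    + intro x. rewrite U; auto.
  - assert (E : forall x, is_derive (fun x => p x + q x) x (Derive p x + Derive q x)).
    { intro x. apply (is_derive_plus p q); auto. }
    assert (U : forall x, Derive (fun x => p x + q x) x = Derive p x + Derive q x)
      by (intro x; apply is_derive_unique, E).
    split.
    + apply IsPoly_ext with (fun x => Derive p x + Derive q x). constructor; auto.
      intro x. rewrite U; auto.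
    + intro x. rewrite U; auto.
  - assert (E : forall x, is_derive (fun x => p x * q x) x (Derive p x * q x + p x * Derive q x)).
    { intro x. apply is_derive_Reals.
      apply (derivable_pt_lim_mult p q x); apply is_derive_Reals; auto. }
    assert (U : forall x, Derive (fun x => p x * q x) x = Derive p x * q x + p x * Derive q x)
      by (intro x; apply is_derive_unique, E).
    split.
    + apply IsPoly_ext with (fun x => Derive p x * q x + p x * Derive q x).
      repeat constructor; auto.
      intro x. rewrite U; auto.
    + intro x. rewrite U; auto.
Qed.

Lemma IsPoly_bnd p : IsPoly p -> exists B, forall x, 0 <= x <= 1 -> Rabs (p x) <= B.
Proof.
  induction 1 as [c| |p q Hp [B1 H1] Hq [B2 H2]|p q Hp [B1 H1] Hq [B2 H2]].
  - exists (Rabs c). intros; lra.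
  - exists 1. intros x Hx. rewrite Rabs_right; lra.
  - exists (B1 + B2). intros x Hx. eapply Rle_trans; [apply Rabs_triang|].
    specialize (H1 x Hx); specialize (H2 x Hx); lra.
  - exists (B1 * B2). intros x Hx. rewrite Rabs_mult.
    apply Rmult_le_compat; auto; apply Rabs_pos.
Qed.

Fixpoint H (m : nat) : R -> R :=
  match m with
  | O => fun x => x
  | S m' => fun x => Derive (H m') x * (x * (1 - x))
  end.

Lemma H_poly m : IsPoly (H m).
Proof.
  induction m; simpl.
  - constructor.
  - apply (IP_mult (Derive (H m)) (fun x => x * (1 - x))).
    + apply IsPoly_der; auto.
    + apply (IP_mult (fun x => x) (fun x => 1 - x)). constructor.
      apply IsPoly_ext with (fun x => 1 + (-1) * x).
      * apply (IP_plus (fun _ => 1) (fun x => (-1) * x)); constructor; constructor.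
      * intro; ring.
Qed.

Lemma H_bound m : exists K, 0 <= K /\ forall x, 0 <= x <= 1 -> Rabs (H m x) <= K * x.
Proof.
  destruct m as [|m].
  - exists 1. split; [lra|]. intros x Hx. simpl. rewrite Rabs_right; lra.
  - destruct (IsPoly_bnd _ (proj1 (IsPoly_der _ (H_poly m)))) as [B HB].
    assert (0 <= B) by (eapply Rle_trans; [apply Rabs_pos| apply (HB 0); lra]).
    exists B. split; auto. intros x Hx. simpl. rewrite Rabs_mult.
    rewrite (Rabs_right (x * (1 - x))) by nra.
    specialize (HB x Hx).
    apply Rle_trans with (B * (x * (1 - x))).
    + apply Rmult_le_compat_r; nra.
    + nra.
Qed.

Section Main.
Variable b : nat -> R.
Hypothesis bpos : forall j, 0 < b j.

Definition sig j s := exp s / (b j + exp s).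

Lemma sig_bounds j s : 0 < sig j s /\ sig j s < 1 /\ sig j s <= exp s / b j.
Proof.
  pose proof (bpos j); pose proof (exp_pos s). unfold sig.
  repeat split.
  - apply Rdiv_lt_0_compat; lra.
  - apply Rmult_lt_reg_r with (b j + exp s); [lra|].
    unfold Rdiv. rewrite Rmult_assoc, Rinv_l by lra. lra.
  - unfold Rdiv. apply Rmult_le_compat_l; [lra|].
    apply Rinv_le_contravar; lra.
Qed.

Lemma sig_deriv j s : is_derive (sig j) s (sig j s * (1 - sig j s)).
Proof.
  pose proof (bpos j); pose proof (exp_pos s). unfold sig.
  auto_derive; [lra|]. field. lra.
Qed.

Definition term (m : nat) (j : nat) (s : R) : R :=
  match m with
  | O => ln (1 + exp s / b j)
  | S m' => H m' (sig j s)
  end.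

Lemma term_deriv m j s : is_derive (term m j) s (term (S m) j s).
Proof.
  pose proof (bpos j); pose proof (exp_pos s).
  destruct m as [|m]; simpl.
  - assert (0 < exp s / b j) by (apply Rdiv_lt_0_compat; lra).
    change (is_derive (fun s => ln (1 + exp s / b j)) s (exp s / (b j + exp s))).
    auto_derive; [lra|]. field. lra.
  - pose proof (is_derive_comp (H m) (sig j) s _ _
       (proj2 (IsPoly_der _ (H_poly m)) (sig j s)) (sig_deriv j s)) as Hc.
    change (is_derive (fun s => H m (sig j s)) s (Derive (H m) (sig j s) * (sig j s * (1 - sig j s)))).
    rewrite Rmult_comm. exact Hc.
Qed.

Lemma term_bound m : exists K, 0 <= K /\ forall j s, Rabs (term m j s) <= K * (exp s / b j).
Proof.
  destruct m as [|m].
  - exists 1. split; [lra|]. intros j s. simpl.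
    pose proof (bpos j); pose proof (exp_pos s).
    assert (0 < exp s / b j) by (apply Rdiv_lt_0_compat; lra).
    assert (0 <= ln (1 + exp s / b j)) by (rewrite <- ln_1; apply ln_le; lra).
    assert (ln (1 + exp s / b j) <= exp s / b j).
    { rewrite <- (ln_exp (exp s / b j)) at 2. apply ln_le; [lra|]. apply exp_ineq1_le. }
    rewrite Rabs_right; lra.
  - destruct (H_bound m) as [K [HK HB]]. exists K. split; auto. intros j s. simpl.
    destruct (sig_bounds j s) as [S1 [S2 S3]].
    eapply Rle_trans; [apply HB; lra|]. apply Rmult_le_compat_l; auto.
Qed.

Hypothesis bsum : ex_series (fun j => / b j).

Lemma term_series m s : ex_series (fun j => term m j s).
Proof.
  destruct (term_bound m) as [K [HK HB]].
  apply (exs_le _ (fun j => (K * exp s) * / b j)).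
  - intro j. rewrite Rmult_assoc. apply HB.
  - apply exs_scal_l; auto.
Qed.

Lemma Derive_n_Flog m : forall s, Derive_n (Flog b) m s = Series (fun j => term m j s).
Proof.
  induction m as [|m IH]; intro s.
  - reflexivity.
  - simpl. rewrite (Derive_ext _ _ s IH).
    apply is_derive_unique.
    destruct (term_bound (S m)) as [K [HK HB]].
    apply (series_derive (term m) (term (S m)) (fun j => (K * exp (s + 1)) * / b j) s 1).
    + lra.
    + intros j x _. apply term_deriv.
    + intros j x Hx. eapply Rle_trans; [apply HB|]. rewrite Rmult_assoc.
      apply Rmult_le_compat_l; auto. unfold Rdiv.
      apply Rmult_le_compat_r; [left; apply Rinv_0_lt_compat, bpos|].
      destruct (Rabs_def2 _ _ Hx). left; apply exp_increasing; lra.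
    + apply exs_scal_l; auto.
    + apply term_series.
Qed.

End Main.

Theorem lemma4p5 :
  forall k : nat, (2 <= k)%nat ->
  exists C : R, 0 < C /\
    forall b : nat -> R,
      (forall j, 0 < b j) ->
      (forall j, b j < b (S j)) ->
      ex_series (fun j => / b j) ->
      forall s : R,
        Rabs (Derive_n (Flog b) k s) <= C * Derive_n (Flog b) 2 s.
Proof.
  intros k Hk.
  destruct k as [|[|m]]; [lia|lia|].
  destruct (IsPoly_bnd _ (proj1 (IsPoly_der _ (H_poly m)))) as [B HB].
  exists (Rabs B + 1). split; [pose proof (Rabs_pos B); lra|].
  intros b bpos _ bsum s.
  rewrite !(Derive_n_Flog b bpos bsum).
  assert (D0 : forall x, Derive (H 0) x = 1).
  { intro x. apply is_derive_unique. apply (is_derive_id x). }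
  assert (E2 : forall j, term b 2 j s = sig b j s * (1 - sig b j s)).
  { intro j. simpl. rewrite D0. ring. }
  rewrite (Series_ext _ _ E2).
  assert (Hq : forall j, Rabs (term b (S (S m)) j s) <= (Rabs B + 1) * (sig b j s * (1 - sig b j s))).
  { intro j. simpl. destruct (sig_bounds b bpos j s) as [S1 [S2 S3]].
    rewrite Rabs_mult, (Rabs_right (sig b j s * (1 - sig b j s))) by nra.
    apply Rmult_le_compat_r; [nra|]. specialize (HB (sig b j s)).
    pose proof (Rle_abs B). assert (Rabs (Derive (H m) (sig b j s)) <= B) by (apply HB; lra). lra. }
  assert (Es : ex_series (fun j => sig b j s * (1 - sig b j s))).
  { apply (exs_le _ (fun j => exp s * / b j)).
    - intro j. destruct (sig_bounds b bpos j s) as [S1 [S2 S3]].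
      rewrite Rabs_right by nra. unfold Rdiv in S3. nra.
    - apply exs_scal_l; auto. }
  eapply Rle_trans. apply Series_Rabs.
  - apply (exs_le _ (fun j => (Rabs B + 1) * (sig b j s * (1 - sig b j s)))).
    + intro j. rewrite Rabs_Rabsolu. apply Hq.
    + apply exs_scal_l; auto.
  - rewrite <- Series_scal_l. apply Series_le.
    + intro j. split; [apply Rabs_pos| apply Hq].
    + apply exs_scal_l; auto.
Qed.
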